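(* Let $A$ be a positive $2\times 2$ matrix that is not doubly stochastic. If the column scaled matrix $A\,Y(A)$ is doubly stochastic, then $A$ is of the form $A=\begin{pmatrix} a & ct\\ c & at\end{pmatrix}$ for some positive reals $a,c,t$, and \[ S(A)=A\,Y(A)=\begin{pmatrix} a/(a+c) & c/(a+c)\\ c/(a+c) & a/(a+c)\end{pmatrix}. \] If the row scaled matrix $X(A)\,A$ is doubly stochastic, then $A$ is of the form $A=\begin{pmatrix} a & b\\ bt & at\end{pmatrix}$ for some positive reals $a,b,t$, and \[ S(A)=X(A)\,A=\begin{pmatrix} a/(a+b) & b/(a+b)\\ b/(a+b) & a/(a+b)\end{pmatrix}. \]
   Context: A positive matrix has all entries positive. For an $n\times n$ matrix $A=(a_{i,j})$ let $\mathrm{row}_i(A)=\sum_j a_{i,j}$ and $\mathrm{col}_j(A)=\sum_i a_{i,j}$; $A$ is doubly stochastic if all row and column sums equal $1$. For positive $A$ let $X(A)=\mathrm{diag}(1/\mathrm{row}_1(A),\ldots,1/\mathrm{row}_n(A))$ (row scaling: $X(A)A$) and $Y(A)=\mathrm{diag}(1/\mathrm{col}_1(A),\ldots,1/\mathrm{col}_n(A))$ (column scaling: $AY(A)$). The alternate minimization sequence of $A$ is $A^{(0)}=A$, $A^{(2k+1)}=A^{(2k)}\,Y(A^{(2k)})$, $A^{(2k+2)}=X(A^{(2k+1)})\,A^{(2k+1)}$ ($k\ge 0$); its limit $S(A)=\lim_{\ell\to\infty}A^{(\ell)}$ is the alternate minimization (Sinkhorn) limit of $A$. *)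

(* Defs.v *)
From HB Require Import structures.
From mathcomp Require Import all_boot all_order all_algebra.
From mathcomp Require Import all_classical all_reals all_analysis.
Set Implicit Arguments. Unset Strict Implicit. Unset Printing Implicit Defensive.
Import Order.TTheory GRing.Theory Num.Theory.
Import numFieldNormedType.Exports.
Local Open Scope classical_set_scope.
Local Open Scope ring_scope.

Section Sinkhorn.
Variables (R : realType) (n : nat).

Definition positive_mx (A : 'M[R]_n) : Prop := forall i j, 0 < A i j.

Definition row_sum (A : 'M[R]_n) (i : 'I_n) : R := \sum_(j < n) A i j.
Definition col_sum (A : 'M[R]_n) (j : 'I_n) : R := \sum_(i < n) A i j.

Definition doubly_stochastic (A : 'M[R]_n) : Prop :=
  (forall i, row_sum A i = 1) /\ (forall j, col_sum A j = 1).

Definition Xmx (A : 'M[R]_n) : 'M[R]_n := diag_mx (\row_i (row_sum A i)^-1).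
Definition Ymx (A : 'M[R]_n) : 'M[R]_n := diag_mx (\row_j (col_sum A j)^-1).

(* alternate minimization sequence: A^(0) = A, A^(2k+1) = A^(2k) Y(A^(2k)),
   A^(2k+2) = X(A^(2k+1)) A^(2k+1) *)
Fixpoint am_seq (A : 'M[R]_n) (l : nat) : 'M[R]_n :=
  match l with
  | 0 => A
  | l'.+1 => let B := am_seq A l' in
             if odd l' then Xmx B *m B else B *m Ymx B
  end.

(* "S(A) = M": the alternate minimization sequence converges (entrywise) to M *)
Definition sinkhorn_limit (A M : 'M[R]_n) : Prop :=
  forall i j, (fun l => am_seq A l i j) @ \oo --> M i j.

End Sinkhorn.

Definition mx2 (R : realType) (x11 x12 x21 x22 : R) : 'M[R]_2 :=
  \matrix_(i < 2, j < 2)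
    if i == ord0 then (if j == ord0 then x11 else x12)
    else (if j == ord0 then x21 else x22).

(* Main.v *)
Require Import Defs.
From HB Require Import structures.
From mathcomp Require Import all_boot all_order all_algebra.
From mathcomp Require Import all_classical all_reals all_analysis.
From mathcomp Require Import lra ring.
Import Order.TTheory GRing.Theory Num.Theory.
Import numFieldNormedType.Exports.
Local Open Scope classical_set_scope.
Local Open Scope ring_scope.

Section H.
Variable R : realType.

Lemma I2_cases (i : 'I_2) : i = ord0 \/ i = ord_max.
Proof. case: i => [[|[|//]] Hi]; [left|right]; exact: val_inj. Qed.

Lemma mx2E00 (a b c d : R) : mx2 a b c d ord0 ord0 = a.
Proof. by rewrite /mx2 mxE. Qed.
Lemma mx2E01 (a b c d : R) : mx2 a b c d ord0 ord_max = b.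
Proof. by rewrite /mx2 mxE. Qed.
Lemma mx2E10 (a b c d : R) : mx2 a b c d ord_max ord0 = c.
Proof. by rewrite /mx2 mxE. Qed.
Lemma mx2E11 (a b c d : R) : mx2 a b c d ord_max ord_max = d.
Proof. by rewrite /mx2 mxE. Qed.

Definition mx2EE := (mx2E00, mx2E01, mx2E10, mx2E11).

Lemma mx2_eta (A : 'M[R]_2) :
  A = mx2 (A ord0 ord0) (A ord0 ord_max) (A ord_max ord0) (A ord_max ord_max).
Proof.
apply/matrixP => i j.
by case: (I2_cases i) => ->; case: (I2_cases j) => ->; rewrite ?mx2E00 ?mx2E01 ?mx2E10 ?mx2E11.
Qed.

Lemma sum2 (F : 'I_2 -> R) : \sum_(j < 2) F j = F ord0 + F ord_max.
Proof. by rewrite big_ord_recr big_ord1 /=; congr (F _ + F _); apply: val_inj. Qed.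

Lemma rs_mx2 (a b c d : R) :
  row_sum (mx2 a b c d) ord0 = a + b /\ row_sum (mx2 a b c d) ord_max = c + d.
Proof. by rewrite /row_sum !sum2 ?mx2E00 ?mx2E01 ?mx2E10 ?mx2E11. Qed.
Lemma cs_mx2 (a b c d : R) :
  col_sum (mx2 a b c d) ord0 = a + c /\ col_sum (mx2 a b c d) ord_max = b + d.
Proof. by rewrite /col_sum !sum2 ?mx2E00 ?mx2E01 ?mx2E10 ?mx2E11. Qed.

Lemma X_mx2 (a b c d : R) : Xmx (mx2 a b c d) *m mx2 a b c d =
  mx2 (a / (a + b)) (b / (a + b)) (c / (c + d)) (d / (c + d)).
Proof.
rewrite /Xmx mul_diag_mx; apply/matrixP => i j; rewrite !mxE.
have [r0 r1] := rs_mx2 a b c d.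
case: (I2_cases i) => ->; case: (I2_cases j) => ->;
  by rewrite ?r0 ?r1 ?mx2E00 ?mx2E01 ?mx2E10 ?mx2E11 mulrC.
Qed.

Lemma Y_mx2 (a b c d : R) : mx2 a b c d *m Ymx (mx2 a b c d) =
  mx2 (a / (a + c)) (b / (b + d)) (c / (a + c)) (d / (b + d)).
Proof.
rewrite /Ymx mul_mx_diag; apply/matrixP => i j; rewrite !mxE.
have [r0 r1] := cs_mx2 a b c d.
case: (I2_cases i) => ->; case: (I2_cases j) => ->;
  by rewrite ?r0 ?r1 ?mx2E00 ?mx2E01 ?mx2E10 ?mx2E11.
Qed.

Lemma Xmx_ds (B : 'M[R]_2) : doubly_stochastic B -> Xmx B *m B = B.
Proof.
move=> [hr _]; rewrite /Xmx.
have -> : \row_i (row_sum B i)^-1 = const_mx 1.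
  by apply/rowP => i; rewrite !mxE hr invr1.
by rewrite diag_const_mx mul_scalar_mx scale1r.
Qed.

Lemma Ymx_ds (B : 'M[R]_2) : doubly_stochastic B -> B *m Ymx B = B.
Proof.
move=> [_ hc]; rewrite /Ymx.
have -> : \row_i (col_sum B i)^-1 = const_mx 1.
  by apply/rowP => i; rewrite !mxE hc invr1.
by rewrite diag_const_mx mul_mx_scalar scale1r.
Qed.

Lemma cvg_alt (u v : R ^nat) (L : R) : u @ \oo --> L -> v @ \oo --> L ->
  (fun l => if odd l then u l else v l) @ \oo --> L.
Proof.
move=> /cvgrPdist_lt hu /cvgrPdist_lt hv; apply/cvgrPdist_lt => e e0.
by apply: filterS2 (hu e e0) (hv e e0) => l h1 h2; case: ifP.
Qed.

Lemma cvg_alt' (w u v : R ^nat) (L : R) : (forall n, w n = if odd n then u n else v n) ->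
  u @ \oo --> L -> v @ \oo --> L -> w @ \oo --> L.
Proof.
move=> hw hu hv; have -> : w = (fun l => if odd l then u l else v l) by apply: funext.
exact: cvg_alt.
Qed.

Lemma cvg_frac (z : R ^nat) (p q r s : R) : r != 0 -> z @ \oo --> 0 ->
  (fun l => (p + q * z l) / (r + s * z l)) @ \oo --> p / r.
Proof.
move=> r0 hz.
have h1 : (fun l => p + q * z l) @ \oo --> p + q * 0.
  apply: cvgD; first exact: cvg_cst.
  by apply: cvgM => //; exact: cvg_cst.
have h2 : (fun l => r + s * z l) @ \oo --> r + s * 0.
  apply: cvgD; first exact: cvg_cst.
  by apply: cvgM => //; exact: cvg_cst.
rewrite !mulr0 !addr0 in h1 h2.
exact: cvgM h1 (cvgV r0 h2).
Qed.


Lemma am_seqS (A : 'M[R]_2) l : am_seq A l.+1 =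
  if odd l then Xmx (am_seq A l) *m am_seq A l else am_seq A l *m Ymx (am_seq A l).
Proof. by []. Qed.

Lemma solve_div (x y z : R) : y != 0 -> x * y = z -> x = z / y.
Proof. by move=> hy <-; rewrite mulfK. Qed.

Lemma part1 (p q r s : R) : 0 < p -> 0 < q -> 0 < r -> 0 < s ->
  let M := mx2 p q r s in
  doubly_stochastic (M *m Ymx M) ->
     exists a c t : R, [/\ 0 < a /\ 0 < c /\ 0 < t,
       M = mx2 a (c * t) c (a * t),
       sinkhorn_limit M (M *m Ymx M) &
       M *m Ymx M = mx2 (a / (a + c)) (c / (a + c)) (c / (a + c)) (a / (a + c))].
Proof.
move=> p0 q0 r0 s0 M ds.
have seq1 : forall l, am_seq M l.+1 = M *m Ymx M.
  elim=> [//|l IH]; rewrite am_seqS IH.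
  by case: ifP => _; [rewrite Xmx_ds | rewrite Ymx_ds].
have hlim : sinkhorn_limit M (M *m Ymx M).
  move=> i j; rewrite -cvg_shiftS /=.
  have -> : (fun n => am_seq M n.+1 i j) = (fun=> (M *m Ymx M) i j).
    by apply: funext => n; rewrite seq1.
  exact: cvg_cst.
have ds' := ds; case: ds' => hr _.
have h := hr ord0; rewrite /M Y_mx2 (rs_mx2 _ _ _ _).1 in h.
have pr0 : p + r != 0 by apply: lt0r_neq0; lra.
have qs0 : q + s != 0 by apply: lt0r_neq0; lra.
have e : p * q = r * s.
  have : (p / (p + r) + q / (q + s)) * ((p + r) * (q + s)) = (p + r) * (q + s)
    by rewrite h mul1r.
  have -> : (p / (p + r) + q / (q + s)) * ((p + r) * (q + s)) =
     p * (q + s) + q * (p + r) by field; rewrite pr0 qs0.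
  move=> hh; nra.
set t := (q + s) / (p + r).
have t0 : 0 < t by apply: divr_gt0; lra.
have eq : q = r * t by rewrite /t mulrA; apply: solve_div => //; nra.
have es : s = p * t by rewrite /t mulrA; apply: solve_div => //; nra.
exists p, r, t; split => //.
- by rewrite /M -eq -es.
- rewrite /M Y_mx2 eq es.
  have pt0 : p + r != 0 by apply: lt0r_neq0; lra.
  have tt0 : t != 0 by apply: lt0r_neq0.
  have rt0 : r * t + p * t != 0 by apply: lt0r_neq0; apply: addr_gt0; apply: mulr_gt0.
  by congr mx2; field; rewrite pt0 rt0.
Qed.

Lemma ratio_bnd (x y : R) : 0 < x -> 0 < y -> -1 < (y - x) / (x + y) < 1.
Proof.
move=> x0 y0; have xy : 0 < x + y by apply: addr_gt0.
rewrite ltr_pdivlMr ?ltr_pdivrMr // mulN1r mul1r; apply/andP; split; lra.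
Qed.

Section P2.
Variables a b : R.
Hypotheses (a0 : 0 < a) (b0 : 0 < b).
Definition f1 (z : R) := (a + a*z)/((a+b) + (a-b)*z).
Definition f2 (z : R) := (b + b*z)/((a+b) + (b-a)*z).
Definition f3 (z : R) := (b + (-b)*z)/((a+b) + (a-b)*z).
Definition f4 (z : R) := (a + (-a)*z)/((a+b) + (b-a)*z).

Ltac prep z z1 z2 :=
  (have h1 : 0 < a*(1+z) by apply: mulr_gt0 => //; lra);
  (have h2 : 0 < b*(1-z) by apply: mulr_gt0 => //; lra);
  (have h3 : 0 < a*(1-z) by apply: mulr_gt0 => //; lra);
  (have h4 : 0 < b*(1+z) by apply: mulr_gt0 => //; lra);
  (have D1 : 0 < (a+b) + (a-b)*z by nra);
  (have D2 : 0 < (a+b) + (b-a)*z by nra);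
  (have h5 : 0 < a*b by apply: mulr_gt0);
  (have h6 : 0 <= (a-b)^+2*(1-z) by apply: mulr_ge0; [exact: sqr_ge0|lra]);
  (have h6' : 0 <= (a-b)^+2*(1+z) by apply: mulr_ge0; [exact: sqr_ge0|lra]);
  (have h7 : 0 < (a+a*z)*((a+b)+(b-a)*z) by apply: mulr_gt0 => //; nra);
  (have h8 : 0 < (b+b*z)*((a+b)+(a-b)*z) by apply: mulr_gt0 => //; nra);
  (have h9 : 0 < (a-a*z)*((a+b)+(a-b)*z) by apply: mulr_gt0 => //; nra);
  (have h10 : 0 < (b-b*z)*((a+b)+(b-a)*z) by apply: mulr_gt0 => //; nra).

Lemma id1 z : -1 < z < 1 -> f1 z / (f1 z + f2 z) = f1 ((b-a)/(a+b)*z).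
Proof.
move=> /andP[z1 z2]; prep z z1 z2.
rewrite /f1 /f2; field.
repeat (apply/andP; split); apply: lt0r_neq0; nra.
Qed.
Lemma id2 z : -1 < z < 1 -> f2 z / (f1 z + f2 z) = f3 ((b-a)/(a+b)*z).
Proof.
move=> /andP[z1 z2]; prep z z1 z2.
rewrite /f1 /f2 /f3; field.
repeat (apply/andP; split); apply: lt0r_neq0; nra.
Qed.
Lemma id3 z : -1 < z < 1 -> f3 z / (f3 z + f4 z) = f2 ((b-a)/(a+b)*z).
Proof.
move=> /andP[z1 z2]; prep z z1 z2.
rewrite /f4 /f2 /f3; field.
repeat (apply/andP; split); apply: lt0r_neq0; nra.
Qed.
Lemma id4 z : -1 < z < 1 -> f4 z / (f3 z + f4 z) = f4 ((b-a)/(a+b)*z).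
Proof.
move=> /andP[z1 z2]; prep z z1 z2.
rewrite /f4 /f3; field.
repeat (apply/andP; split); apply: lt0r_neq0; nra.
Qed.

Definition Cm z := mx2 (f1 z) (f2 z) (f3 z) (f4 z).
Definition Rm z := mx2 (f1 z) (f3 z) (f2 z) (f4 z).

Lemma init_id (t : R) : 0 < t ->
  mx2 a b (b*t) (a*t) *m Ymx (mx2 a b (b*t) (a*t)) = Cm ((1-t)/(1+t)).
Proof.
move=> t0; rewrite Y_mx2 /Cm /f1 /f2 /f3 /f4.
have t1 : 1 + t != 0 by apply: lt0r_neq0; lra.
have e1 : a + b*t != 0 by apply: lt0r_neq0; apply: addr_gt0 => //; apply: mulr_gt0.
have e2 : b + a*t != 0 by apply: lt0r_neq0; apply: addr_gt0 => //; apply: mulr_gt0.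
have e3 : (a+b)*(1+t) + (a-b)*(1-t) != 0.
  apply: lt0r_neq0; have : 0 < a*t by apply: mulr_gt0.
  have : 0 < b*t by apply: mulr_gt0. nra.
have e4 : (a+b)*(1+t) + (b-a)*(1-t) != 0.
  apply: lt0r_neq0; have : 0 < a*t by apply: mulr_gt0.
  have : 0 < b*t by apply: mulr_gt0. nra.
congr mx2; field; rewrite ?t1 ?e1 ?e2 ?e3 ?e4 //.
Qed.


Lemma sink2 t : 0 < t -> sinkhorn_limit (mx2 a b (b*t) (a*t))
  (mx2 (a/(a+b)) (b/(a+b)) (b/(a+b)) (a/(a+b))).
Proof.
move=> t0; set A := mx2 a b (b*t) (a*t).
set rho := (b-a)/(a+b); set z0 := (1-t)/(1+t).
have ab0 : 0 < a + b by apply: addr_gt0.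
have rho1 : -1 < rho < 1 by exact: ratio_bnd.
have z01 : -1 < z0 < 1 by rewrite /z0 [1 + t]addrC; apply: ratio_bnd => //; lra.
pose zs l := rho ^+ l * z0.
have zsS l : zs l.+1 = rho * zs l by rewrite /zs exprS mulrA.
have zsb l : -1 < zs l < 1.
  elim: l => [|l IH]; first by rewrite /zs expr0 mul1r.
  rewrite zsS; move/andP: IH => [i1 i2]; move/andP: rho1 => [r1 r2].
  have k1 : 0 < (1 - rho) * (1 - zs l) by apply: mulr_gt0; lra.
  have k2 : 0 < (1 + rho) * (1 + zs l) by apply: mulr_gt0; lra.
  have k3 : 0 < (1 - rho) * (1 + zs l) by apply: mulr_gt0; lra.
  have k4 : 0 < (1 + rho) * (1 - zs l) by apply: mulr_gt0; lra.
  apply/andP; split; nra.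
have seqE l : am_seq A l.+1 = if odd l then Rm (zs l) else Cm (zs l).
  elim: l => [|l IH]; first by rewrite am_seqS /= init_id // /zs expr0 mul1r.
  rewrite am_seqS IH /=; have zb := zsb l.
  case: (odd l) => /=.
  - by rewrite /Rm Y_mx2 /Cm zsS id1 ?id2 ?id3 ?id4.
  - by rewrite /Cm X_mx2 /Rm zsS id1 ?id2 ?id3 ?id4.
have zs0 : zs @ \oo --> 0.
  have rhon : `|rho| < 1 by rewrite ltr_norml.
  have := cvgM (cvg_expr rhon) (cvg_cst z0); rewrite mul0r; exact.
have ab1 : a + b != 0 by apply: lt0r_neq0.
have L1 : (fun n => f1 (zs n)) @ \oo --> a/(a+b) by exact: cvg_frac.
have L2 : (fun n => f2 (zs n)) @ \oo --> b/(a+b).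
  by exact: cvg_frac.
have L3 : (fun n => f3 (zs n)) @ \oo --> b/(a+b) by exact: cvg_frac.
have L4 : (fun n => f4 (zs n)) @ \oo --> a/(a+b).
  by rewrite /f4 ; exact: cvg_frac.
move=> i j; rewrite -cvg_shiftS.
case: (I2_cases i) => ->; case: (I2_cases j) => ->; rewrite ?mx2E00 ?mx2E01 ?mx2E10 ?mx2E11.
- apply: (@cvg_alt' _ (fun n => f1 (zs n)) (fun n => f1 (zs n))) => // n.
  transitivity (am_seq A n.+1 ord0 ord0); first by [].
  by rewrite seqE /Rm /Cm; case: odd; rewrite ?mx2E00.
- apply: (@cvg_alt' _ (fun n => f3 (zs n)) (fun n => f2 (zs n))) => // n.
  transitivity (am_seq A n.+1 ord0 ord_max); first by [].
  by rewrite seqE /Rm /Cm; case: odd; rewrite ?mx2E01.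
- apply: (@cvg_alt' _ (fun n => f2 (zs n)) (fun n => f3 (zs n))) => // n.
  transitivity (am_seq A n.+1 ord_max ord0); first by [].
  by rewrite seqE /Rm /Cm; case: odd; rewrite ?mx2E10.
- apply: (@cvg_alt' _ (fun n => f4 (zs n)) (fun n => f4 (zs n))) => // n.
  transitivity (am_seq A n.+1 ord_max ord_max); first by [].
  by rewrite seqE /Rm /Cm; case: odd; rewrite ?mx2E11.
Qed.

End P2.

Lemma part2 (p q r s : R) : 0 < p -> 0 < q -> 0 < r -> 0 < s ->
  let M := mx2 p q r s in
  doubly_stochastic (Xmx M *m M) ->
     exists a b t : R, [/\ 0 < a /\ 0 < b /\ 0 < t,
       M = mx2 a b (b * t) (a * t),
       sinkhorn_limit M (Xmx M *m M) &
       Xmx M *m M = mx2 (a / (a + b)) (b / (a + b)) (b / (a + b)) (a / (a + b))].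
Proof.
move=> p0 q0 r0 s0 M ds.
case: ds => _ hc.
have h := hc ord0; rewrite /M X_mx2 (cs_mx2 _ _ _ _).1 in h.
have pq0 : p + q != 0 by apply: lt0r_neq0; lra.
have rs0 : r + s != 0 by apply: lt0r_neq0; lra.
have e : p * r = q * s.
  have : (p / (p + q) + r / (r + s)) * ((p + q) * (r + s)) = (p + q) * (r + s)
    by rewrite h mul1r.
  have -> : (p / (p + q) + r / (r + s)) * ((p + q) * (r + s)) =
     p * (r + s) + r * (p + q) by field; rewrite pq0 rs0.
  move=> hh; nra.
set t := (r + s) / (p + q).
have t0 : 0 < t by apply: divr_gt0; lra.
have er : r = q * t by rewrite /t mulrA; apply: solve_div => //; nra.
have es : s = p * t by rewrite /t mulrA; apply: solve_div => //; nra.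
have eM : M = mx2 p q (q * t) (p * t) by rewrite /M -er -es.
have eX : Xmx M *m M = mx2 (p / (p + q)) (q / (p + q)) (q / (p + q)) (p / (p + q)).
  rewrite /M X_mx2 er es.
  have tt0 : t != 0 by apply: lt0r_neq0.
  have rt0 : q * t + p * t != 0 by apply: lt0r_neq0; apply: addr_gt0; apply: mulr_gt0.
  by congr mx2; field; rewrite pq0 rt0.
exists p, q, t; split => //.
by rewrite eX eM; apply: sink2.
Qed.
End H.

Theorem theorem7 (R : realType) (A : 'M[R]_2) :
  positive_mx A -> ~ doubly_stochastic A ->
  (doubly_stochastic (A *m Ymx A) ->
     exists a c t : R, [/\ 0 < a /\ 0 < c /\ 0 < t,
       A = mx2 a (c * t) c (a * t),
       sinkhorn_limit A (A *m Ymx A) &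
       A *m Ymx A = mx2 (a / (a + c)) (c / (a + c)) (c / (a + c)) (a / (a + c))])
  /\
  (doubly_stochastic (Xmx A *m A) ->
     exists a b t : R, [/\ 0 < a /\ 0 < b /\ 0 < t,
       A = mx2 a b (b * t) (a * t),
       sinkhorn_limit A (Xmx A *m A) &
       Xmx A *m A = mx2 (a / (a + b)) (b / (a + b)) (b / (a + b)) (a / (a + b))]).
Proof.
move=> pos _; rewrite (@mx2_eta _ A); split.
- by apply: part1; apply: pos.
- by apply: part2; apply: pos.
Qed.
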